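(* Let $\{\emptyset,\Omega\}=\mathcal{F}_0\subseteq\cdots\subseteq\mathcal{F}_n$ be $\sigma$-fields on a probability space and let $(\xi_i,\mathcal{F}_i)_{i=1,\dots,n}$ be square-integrable supermartingale differences (each $\xi_i$ is $\mathcal{F}_i$-measurable with $\mathbf{E}\xi_i^2<\infty$ and $\mathbf{E}(\xi_i\mid\mathcal{F}_{i-1})\le0$). Then for all $y\ge0$, all $\lambda>0$ and each $i$, \[ \mathbf{E}\left(\exp\left\{\lambda\xi_i-\tfrac12(\lambda\xi_i)^2\mathbf{1}_{\{\xi_i>y\}}\right\}\,\Big|\,\mathcal{F}_{i-1}\right)\le\exp\left\{\left(\frac{e^{\lambda y}-1-\lambda y}{y^2}\right)\mathbf{E}\big(\xi_i^2\mathbf{1}_{\{\xi_i\le y\}}\mid\mathcal{F}_{i-1}\big)\right\}, \] where by convention $\frac{e^{\lambda y}-1-\lambda y}{y^2}=\frac{\lambda^2}{2}$ when $y=0$. *)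

(* Defs.v *)
From HB Require Import structures.
From mathcomp Require Import all_boot all_order all_algebra.
From mathcomp Require Import all_classical all_reals all_analysis.
Set Implicit Arguments. Unset Strict Implicit. Unset Printing Implicit Defensive.
Import Order.TTheory GRing.Theory Num.Theory.
Local Open Scope classical_set_scope.
Local Open Scope ring_scope.

Definition sub_sigma_field d (T : measurableType d) (G : set (set T)) :=
  sigma_algebra setT G /\ (forall A, G A -> measurable A).

Definition G_measurable d (T : measurableType d) (R : realType)
    (G : set (set T)) (Z : T -> R) :=
  forall B : set R, measurable B -> G (Z @^-1` B).

Definition cond_exp_version d (T : measurableType d) (R : realType)
    (P : probability T R) (G : set (set T)) (X Z : T -> R) :=
  [/\ G_measurable G Z,
      P.-integrable setT (EFin \o Z) &
      forall A, G A -> (\int[P]_(x in A) (Z x)%:E = \int[P]_(x in A) (X x)%:E)%E].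

Definition coef (R : realType) (lambda y : R) : R :=
  if y == 0 then lambda ^+ 2 / 2
  else (expR (lambda * y) - 1 - lambda * y) / y ^+ 2.

(* Main.v *)
Require Import Defs.
From HB Require Import structures.
From mathcomp Require Import all_boot all_order all_algebra.
From mathcomp Require Import all_classical all_reals all_analysis.
From mathcomp Require Import measurable_realfun.
From mathcomp Require Import ring lra.
Import Order.TTheory GRing.Theory Num.Theory.
Local Open Scope classical_set_scope.
Local Open Scope ring_scope.
Section S.
Context d (T : measurableType d) (R : realType) (P : probability T R)
  (G : set (set T)) (hG : sub_sigma_field G).

Lemma gmeasE : G.-sigma.-measurable = G.
Proof. exact: measurable_g_measurableTypeE hG.1. Qed.

Lemma Gm_to (f : T -> R) : G_measurable G f ->
  measurable_fun setT (f : g_sigma_algebraType G -> R).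
Proof.
move=> hf _ B mB; rewrite setTI.
have -> : (G.-sigma.-measurable) = _ := gmeasE.
exact: hf.
Qed.

Lemma Gm_from (f : T -> R) :
  measurable_fun setT (f : g_sigma_algebraType G -> R) -> G_measurable G f.
Proof.
move=> mf B mB; have := mf measurableT B mB; rewrite setTI.
by rewrite gmeasE.
Qed.

Lemma Gm_set (A : set T) : (measurable : set (set (g_sigma_algebraType G))) A -> G A.
Proof. by rewrite gmeasE. Qed.

Lemma Gm_T (f : T -> R) : G_measurable G f -> measurable_fun setT f.
Proof. by move=> hf _ B mB; rewrite setTI; apply: hG.2; exact: hf. Qed.

Lemma le_ae (f g : T -> R) : G_measurable G f -> G_measurable G g ->
  P.-integrable setT (EFin \o f) -> P.-integrable setT (EFin \o g) ->
  (forall A, G A -> (\int[P]_(x in A) (f x)%:E <= \int[P]_(x in A) (g x)%:E)%E) ->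
  {ae P, forall x, f x <= g x}.
Proof.
move=> mf mg intf intg hle.
pose E (j : nat) := [set x | j.+1%:R^-1 <= f x - g x].
have GE j : G (E j).
  apply: Gm_set.
  have mfg : measurable_fun setT ((f \- g) : g_sigma_algebraType G -> R).
    by apply: measurable_funB; apply: Gm_to.
  have -> : E j = (f \- g) @^-1` `[j.+1%:R^-1, +oo[.
    by apply/seteqP; split=> x /=; rewrite in_itv /= andbT.
  by rewrite -[X in measurable X]setTI; apply: mfg => //; exact: measurable_itv.
have mE j : measurable (E j) by apply: hG.2.
have PE j : P (E j) = 0%E.
  apply/eqP; rewrite -measure_le0.
  have intS (h : T -> R) : P.-integrable setT (EFin \o h) -> P.-integrable (E j) (EFin \o h).
    by move=> ih; apply: integrableS ih.
  have fg0 : (\int[P]_(x in E j) ((EFin \o f) \- (EFin \o g)) x <= 0)%E.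
    rewrite integralB//; [|exact: intS..].
    rewrite sube_le0; exact: hle.
  apply: (@le_trans _ _ (j.+1%:R%:E * \int[P]_(x in E j) j.+1%:R^-1%:E))%E.
    by rewrite integral_cst// muleA -EFinM divff// mul1e.
  rewrite -(@mule0 _ j.+1%:R%:E) lee_pmul//; first exact: integral_ge0.
  apply: le_trans fg0.
  apply: ge0_le_integral => //.
  - by apply: emeasurable_funB; apply/measurable_EFinP; apply: measurable_funTS; apply: Gm_T.
have : P.-negligible (\bigcup_j E j).
  apply: negligible_bigcup => j; exists (E j); split => //; exact: PE.
move=> hN; apply: (negligibleS _ hN) => x /= /negP; rewrite -ltNge => /ltr_add_invr[k hk].
exists k => //; rewrite /E /=; rewrite lerBrDl; exact: ltW.
Qed.
End S.

Section ExpIneq.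
Context (R : realType).
Implicit Types x u s t : R.

Lemma cvg_expS x : series (exp_coeff x) @ \oo --> (expR x : R^o).
Proof. exact: (is_cvg_series_exp_coeff x). Qed.

Lemma S_le x N M : 0 <= x -> (N <= M)%N -> series (exp_coeff x) N <= series (exp_coeff x) M.
Proof.
move=> x0 NM; rewrite /series /= (big_cat_nat (leq0n N) NM) /= lerDl.
by apply: sumr_ge0 => k _; apply: exp_coeff_ge0.
Qed.

Lemma S_le_exp x N : 0 <= x -> series (exp_coeff x) N <= expR x.
Proof.
move=> x0; rewrite /expR; apply: nondecreasing_cvgn_le.
  by move=> n m nm; apply: S_le.
exact: is_cvg_series_exp_coeff.
Qed.

Lemma S_dec x N : (2 <= N)%N ->
  series (exp_coeff x) N = 1 + x + \sum_(2 <= k < N) exp_coeff x k.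
Proof.
move=> N2; rewrite /series /= big_ltn ?(leq_trans _ N2)// big_ltn//.
by rewrite /exp_coeff /= expr0 expr1 !divr1 addrA.
Qed.

Lemma g_mono t s : 0 <= t -> t <= s ->
  s ^+ 2 * (expR t - 1 - t) <= t ^+ 2 * (expR s - 1 - s).
Proof.
move=> t0 ts; have s0 : 0 <= s by apply: le_trans ts.
have cv x y : (fun N => y ^+ 2 * (series (exp_coeff x) N - 1 - x)) @ \oo -->
    (y ^+ 2 * (expR x - 1 - x) : R^o).
  apply: cvgMl_tmp; apply: cvgB; last exact: cvg_cst.
  apply: cvgB; last exact: cvg_cst.
  exact: cvg_expS.
apply: (ler_cvg_to (cv t s) (cv s t)).
near=> N.
have N2 : (2 <= N)%N by near: N; exact: nbhs_infty_ge.
have Sx x : series (exp_coeff x) N - 1 - x = \sum_(2 <= k < N) exp_coeff x k.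
  by rewrite S_dec//; ring.
rewrite !Sx.
rewrite !mulr_sumr; apply: ler_sum_nat => k /andP[k2 _].
rewrite /exp_coeff /= -(subnK k2) !exprD !mulrA.
rewrite ler_wpM2r ?invr_ge0 ?ler0n//.
have ab : t ^+ (k - 2) <= s ^+ (k - 2) by apply: lerXn2r; rewrite ?nnegrE.
have st : 0 <= s ^+ 2 * t ^+ 2 by rewrite mulr_ge0// exprn_ge0.
move: ab st; set a := t ^+ (k - 2); set b := s ^+ (k - 2); rewrite !expr2 => ab st.
nra.
Unshelve. all: by end_near. Qed.

Lemma phi_der (u : R) : is_derive u 1 (fun v : R => (1 + v) * expR (2^-1 * v ^+ 2 - v))
  (u ^+ 2 * expR (2^-1 * u ^+ 2 - u)).
Proof.
have h1 := is_deriveD (is_derive_cst (1:R) u 1) (is_derive_id u 1).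
have h3 := is_deriveB (is_deriveZ (2^-1 : R) (is_deriveX 2 (is_derive_id u 1))) (is_derive_id u 1).
have h2 := is_derive1_comp (is_derive_expR _) h3.
have h := is_deriveM h1 h2.
set F := (_ * _) in h.
have -> : (fun v : R => (1 + v) * expR (2^-1 * v ^+ 2 - v)) = F.
  by apply/funext => v; rewrite /F /=.
apply: (is_derive_eq h).
rewrite /GRing.scale /= /GRing.scale /=.
set E := expR _.
rewrite -[(cst 1 + id) u]/(1 + u); field; by [].
all: by [].
Qed.

Lemma exp_sub_le (t : R) : 0 <= t -> expR (t - 2^-1 * t ^+ 2) <= 1 + t.
Proof.
rewrite le_eqVlt => /predU1P[<-|t0].
  by rewrite expr0n /= mulr0 subr0 expR0 addr0.
have [] := MVT t0 (fun x _ => phi_der x).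
  by apply: derivable_within_continuous => r _; have [H _] := phi_der r.
move=> c _; rewrite expr0n /= mulr0 subr0 expR0 addr0 mulr1 subr0 => /eqP.
rewrite subr_eq => /eqP hE.
have hge : 1 <= (1 + t) * expR (2^-1 * t ^+ 2 - t).
  rewrite hE lerDr; apply: mulr_ge0; [apply: mulr_ge0; [exact: sqr_ge0|exact: expR_ge0]|exact: ltW].
rewrite (_ : t - 2^-1 * t ^+ 2 = - (2^-1 * t ^+ 2 - t)); last by ring.
by rewrite expRN -div1r ler_pdivrMr ?expR_gt0.
Qed.

Lemma S4 u : series (exp_coeff u) 4 = 1 + u + u ^+ 2 / 2 + u ^+ 3 / 6.
Proof.
rewrite /series /= !big_nat_recr//= big_geq// /exp_coeff /= add0r.
rewrite !factS fact0 /=; field; by [].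
Qed.

Lemma S3 u : series (exp_coeff u) 3 = 1 + u + u ^+ 2 / 2.
Proof.
rewrite /series /= !big_nat_recr//= big_geq// /exp_coeff /= add0r.
rewrite !factS fact0 /=; field; by [].
Qed.

Lemma exp_neg_le t : t <= 0 -> expR t <= 1 + t + 2^-1 * t ^+ 2.
Proof.
move=> t0; set u := - t; have u0 : 0 <= u by rewrite /u oppr_ge0.
have -> : t = - u by rewrite /u opprK.
have hS := S_le_exp u 4 u0; rewrite S4 in hS.
have hp : 0 < 1 + - u + 2^-1 * (- u) ^+ 2.
  rewrite sqrrN (_ : 1 + - u + 2^-1 * u ^+ 2 = 2^-1 * ((u - 1) ^+ 2 + 1)); last by field; by [].
  by rewrite mulr_gt0// ?invr_gt0// ltr_pwDr// sqr_ge0.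
rewrite expRN -div1r ler_pdivrMr ?expR_gt0//.
apply: (le_trans _ (ler_wpM2l (ltW hp) hS)).
rewrite sqrrN -subr_ge0.
have -> : (1 + - u + 2^-1 * u ^+ 2) * (1 + u + u ^+ 2 / 2 + u ^+ 3 / 6) - 1
  = u ^+ 3 * (2 + u + u ^+ 2) / 12 by field; by [].
by rewrite !mulr_ge0 ?invr_ge0 ?ler0n ?exprn_ge0 ?addr_ge0 ?sqr_ge0.
Qed.

Lemma exp_pos_ge s : 0 <= s -> 2^-1 * s ^+ 2 <= expR s - 1 - s.
Proof.
move=> s0; have := S_le_exp s 3 s0; rewrite S3 => h.
rewrite lerBrDr lerBrDr; apply: le_trans h; rewrite le_eqVlt; apply/orP; left.
apply/eqP; field; by [].
Qed.

Lemma gle t s : 0 < s -> t <= s ->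
  s ^+ 2 * (expR t - 1 - t) <= t ^+ 2 * (expR s - 1 - s).
Proof.
move=> s0 ts; have [t0|t0] := leP 0 t; first exact: g_mono.
have hA : expR t - 1 - t <= 2^-1 * t ^+ 2.
  by have := @exp_neg_le t (ltW t0); lra.
have hB := @exp_pos_ge s (ltW s0).
apply: (le_trans (ler_wpM2l (sqr_ge0 s) hA)).
apply: (le_trans _ (ler_wpM2l (sqr_ge0 t) hB)).
by rewrite le_eqVlt; apply/orP; left; apply/eqP; ring.
Qed.

Lemma pw (lam y x : R) : 0 <= y -> 0 < lam ->
  expR (lam * x - 2^-1 * (lam * x) ^+ 2 * ((y < x)%R : bool)%:R)
  <= 1 + lam * x + coef lam y * (x ^+ 2 * ((x <= y)%R : bool)%:R).
Proof.
move=> y0 l0; have [xy|yx] := leP x y.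
  rewrite mulr0 subr0 mulr1.
  have [y00|ypos] := eqVneq y 0.
    rewrite /coef y00 eqxx; rewrite y00 in xy.
    have hx : lam * x <= 0 by nra.
    have h := @exp_neg_le (lam * x) hx.
    have E : 2^-1 * (lam * x) ^+ 2 = lam ^+ 2 / 2 * x ^+ 2 by field; by [].
    lra.
  rewrite /coef (negbTE ypos).
  set t := lam * x; set s := lam * y; set B := expR s - 1 - s.
  have sp : 0 < s by rewrite mulr_gt0// lt_def ypos.
  suff : s ^+ 2 * (expR t - 1 - t) <= s ^+ 2 * (B / y ^+ 2 * x ^+ 2).
    by rewrite ler_pM2l ?exprn_gt0//; lra.
  have -> : s ^+ 2 * (B / y ^+ 2 * x ^+ 2) = t ^+ 2 * B.
    by rewrite /s /t; field; rewrite ?expf_neq0.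
  by apply: gle => //; rewrite /t /s ler_pM2l.
rewrite mulr1 mulr0 mulr0 addr0; apply: exp_sub_le.
by rewrite mulr_ge0// ltW// (le_lt_trans y0).
Qed.

End ExpIneq.

Section Main.
Context d (T : measurableType d) (R : realType) (P : probability T R).

Lemma lin_int (A : set T) (mA : measurable A) (a b : R) (f g : T -> R) :
  P.-integrable A (EFin \o f) -> P.-integrable A (EFin \o g) ->
  (\int[P]_(x in A) (1 + a * f x + b * g x)%:E =
   \int[P]_(x in A) (cst 1 x)%:E + a%:E * \int[P]_(x in A) (f x)%:E
     + b%:E * \int[P]_(x in A) (g x)%:E)%E.
Proof.
move=> intf intg.
have i1 : P.-integrable A (EFin \o cst 1) by exact: finite_measure_integrable_cst.
have iaf : P.-integrable A (fun x => (a%:E * (EFin \o f) x)%E) by exact: integrableZl.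
have ibg : P.-integrable A (fun x => (b%:E * (EFin \o g) x)%E) by exact: integrableZl.
have -> : (fun x => (1 + a * f x + b * g x)%:E) =
  (fun x => adde (adde ((EFin \o cst 1) x) (a%:E * (EFin \o f) x)%E) (b%:E * (EFin \o g) x)%E).
  by apply/funext => x /=; rewrite !EFinD !EFinM.
rewrite (@integralD _ _ _ P A mA (fun x => adde ((EFin \o cst 1) x) (a%:E * (EFin \o f) x)%E)
  (fun x => b%:E * (EFin \o g) x)%E); [|exact: (integrableD mA i1 iaf)|exact: ibg].
rewrite (@integralD _ _ _ P A mA (EFin \o cst 1) (fun x => a%:E * (EFin \o f) x)%E)//.
by rewrite integralZl// integralZl.
Qed.

Lemma lin_integrable (A : set T) (mA : measurable A) (a b : R) (f g : T -> R) :
  P.-integrable A (EFin \o f) -> P.-integrable A (EFin \o g) ->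
  P.-integrable A (fun x => (1 + a * f x + b * g x)%:E).
Proof.
move=> intf intg.
have i1 : P.-integrable A (EFin \o cst 1) by exact: finite_measure_integrable_cst.
have iaf : P.-integrable A (fun x => (a%:E * (EFin \o f) x)%E) by exact: integrableZl.
have ibg : P.-integrable A (fun x => (b%:E * (EFin \o g) x)%E) by exact: integrableZl.
apply: (eq_integrable mA _ _ _ (integrableD mA (integrableD mA i1 iaf) ibg)).
by move=> x _ /=; rewrite !EFinD !EFinM.
Qed.

Lemma indicP (S : T -> bool) x :
  (\1_[set w | S w] x : R) = (S x)%:R.
Proof.
rewrite indicE; case: (boolP (S x)) => h; first by rewrite (mem_set (h : [set w | S w] x)).
by rewrite memNset//; apply/negP.
Qed.

Lemma mX (f : T -> R) (S : set T) (lam : R) : measurable_fun setT f -> measurable S ->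
  measurable_fun setT (fun x => expR (lam * f x - 2^-1 * (lam * f x) ^+ 2 * (\1_S x : R))).
Proof.
move=> mf mS; apply: measurableT_comp; first exact: measurable_expR.
apply: measurable_funB; first by apply: measurable_funM => //; exact: measurable_cst.
apply: measurable_funM; last exact: measurable_indic.
apply: measurable_funM; first exact: measurable_cst.
apply: measurable_funX; apply: measurable_funM => //; exact: measurable_cst.
Qed.

Lemma mY (f : T -> R) (S : set T) (lam c : R) : measurable_fun setT f -> measurable S ->
  measurable_fun setT (fun x => 1 + lam * f x + c * (f x ^+ 2 * (\1_S x : R))).
Proof.
move=> mf mS; apply: measurable_funD; first apply: measurable_funD.
- exact: measurable_cst.
- by apply: measurable_funM => //; exact: measurable_cst.
apply: measurable_funM; first exact: measurable_cst.
apply: measurable_funM; last exact: measurable_indic.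
exact: measurable_funX.
Qed.

End Main.

Theorem lemma4p1 (d : measure_display) (T : measurableType d) (R : realType)
  (P : probability T R) (n : nat) (F : nat -> set (set T)) (xi : nat -> T -> R)
  (hF : forall i, (i <= n)%N -> sub_sigma_field (F i))
  (hF0 : F 0%N = [set set0; setT])
  (hFmono : forall i, (i < n)%N -> F i `<=` F i.+1)
  (hxi_meas : forall i, (1 <= i <= n)%N -> G_measurable (F i) (xi i))
  (hxi_sq : forall i, (1 <= i <= n)%N ->
     P.-integrable setT (EFin \o (fun x => xi i x ^+ 2)))
  (hxi_super : forall i, (1 <= i <= n)%N ->
     exists Z, cond_exp_version P (F i.-1) (xi i) Z /\ {ae P, forall x, Z x <= 0}) :
  forall (y lambda : R), 0 <= y -> 0 < lambda ->
  forall i, (1 <= i <= n)%N ->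
  forall Z1 Z2 : T -> R,
    cond_exp_version P (F i.-1)
      (fun x => expR (lambda * xi i x
         - 2^-1 * (lambda * xi i x) ^+ 2 * (\1_[set w | y < xi i w] x))) Z1 ->
    cond_exp_version P (F i.-1)
      (fun x => xi i x ^+ 2 * (\1_[set w | xi i w <= y] x)) Z2 ->
    {ae P, forall x, Z1 x <= expR (coef lambda y * Z2 x)}.
Proof.
move=> y lam y0 l0 i /andP[i1 iN] Z1 Z2 [mZ1 iZ1 eZ1] [mZ2 iZ2 eZ2].
have iN' : (1 <= i <= n)%N by rewrite i1 iN.
set G := F i.-1.
have hG : sub_sigma_field G by apply: hF; exact: leq_trans (leq_pred i) iN.
have [Z [[mZ iZ eZ] hZle]] := hxi_super i iN'.
set xi' := xi i.
have mxi : measurable_fun setT xi'.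
  exact: (@Gm_T _ _ _ _ (hF i iN) _ (hxi_meas i iN')).
set c := coef lam y.
pose W x := 1 + lam * Z x + c * Z2 x.
have mW : G_measurable G W.
  apply: (@Gm_from _ _ _ _ hG).
  have hZ := @Gm_to _ _ _ _ hG _ mZ; have hZ2 := @Gm_to _ _ _ _ hG _ mZ2.
  apply: measurable_funD; first apply: measurable_funD.
  - exact: measurable_cst.
  - by apply: measurable_funM => //; exact: measurable_cst.
  - by apply: measurable_funM => //; exact: measurable_cst.
have iW : P.-integrable setT (EFin \o W) by exact: lin_integrable.
have mS1 : measurable [set w | y < xi' w].
  have -> : [set w | y < xi' w] = xi' @^-1` `]y, +oo[.
    by apply/seteqP; split=> x /=; rewrite in_itv /= andbT.
  by rewrite -[X in measurable X]setTI; apply: mxi => //; exact: measurable_itv.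
have mS2 : measurable [set w | xi' w <= y].
  have -> : [set w | xi' w <= y] = xi' @^-1` `]-oo, y].
    by apply/seteqP; split=> x /=; rewrite in_itv.
  by rewrite -[X in measurable X]setTI; apply: mxi => //; exact: measurable_itv.
have isq := hxi_sq i iN'.
have ixi : P.-integrable setT (EFin \o xi').
  have ic : P.-integrable setT (EFin \o cst 1) by exact: finite_measure_integrable_cst.
  apply: (le_integrable measurableT _ _ (integrableD measurableT ic isq)).
    exact/measurable_EFinP.
  move=> x _ /=; rewrite lee_fin (ger0_norm (addr_ge0 ler01 (sqr_ge0 _))).
  rewrite /xi' ler_norml; apply/andP; split; nra.
have ixi2 : P.-integrable setT (EFin \o (fun x => xi' x ^+ 2 * \1_[set w | xi' w <= y] x)).
  apply: (le_integrable measurableT _ _ isq).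
    apply/measurable_EFinP; apply: measurable_funM; last exact: measurable_indic.
    exact: measurable_funX.
  move=> x _ /=; rewrite lee_fin indicE; case: (_ \in _) => /=.
    by rewrite mulr1.
  by rewrite mulr0 normr0.
rewrite /xi' in ixi ixi2 mxi mS1 mS2.
have hle : {ae P, forall x, Z1 x <= W x}.
  apply: (@le_ae _ _ _ P G hG Z1 W mZ1 mW iZ1 iW) => A GA.
  have mA : measurable A := hG.2 A GA.
  have iS h : P.-integrable setT (EFin \o h) -> P.-integrable A (EFin \o h).
    by move=> ih; apply: integrableS ih.
  rewrite eZ1 // /W lin_int //; [|exact: iS..].
  rewrite eZ // eZ2 //.
  rewrite -(@lin_int _ _ _ P A mA lam c _ _ (iS _ ixi) (iS _ ixi2)).
  apply: ge0_le_integral => //.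
  - by apply/measurable_EFinP; apply: measurable_funTS; exact: mX.
  - by apply/measurable_EFinP; apply: measurable_funTS; exact: mY.
  - move=> x _; rewrite lee_fin !indicP.
    exact: pw.
have h2 := hZle.
move: hle h2; apply: filterS2 => x h1 h0.
apply: (le_trans h1); rewrite /W.
apply: (le_trans _ (expR_ge1Dx _)).
have : lam * Z x <= 0 by apply: mulr_ge0_le0 => //; exact: ltW.
lra.
Qed.
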